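(* For every $n\geq1$ and every divisor $d$ of $2n$, $$\mathrm{orb}_d(n)=\begin{cases}\mathrm{orb}_1(n/d), & d \text{ odd},\\ \mathrm{orb}_2(2n/d), & d\text{ even}.\end{cases}$$
   Context: For an integer $n\geq1$ let $V_n=\{v_0,\dots,v_{n-1}\}$, indices modulo $n$. The dihedral group $D_{2n}=\{1,\sigma,\dots,\sigma^{n-1},\tau,\sigma\tau,\dots,\sigma^{n-1}\tau\}$ acts on subsets of $V_n$ elementwise, with $\sigma(v_i)=v_{i+1}$, $\tau(v_i)=v_{n-i}$. Let $\mathbf{X}_n$ be the family of subsets $X\subseteq V_n$ such that (a) there is no $i\in\mathbb{Z}_n$ with $v_i,v_{i+1}\in X$, and (b) for every $i\in\mathbb{Z}_n$ at least one of $v_i,v_{i+1},v_{i+2}$ lies in $X$ (for $n\geq3$ these are exactly the maximal independent sets of the cycle graph $C_n$ with edges $v_iv_{i+1}$). $\mathbf{X}_n$ is invariant under $D_{2n}$. For $d\mid 2n$, $\mathrm{orb}_d(n)$ denotes the number of $D_{2n}$-orbits of $\mathbf{X}_n$ of cardinality $2n/d$ (equivalently, whose elements have stabilizer of order $d$). *)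

(* Defs.v *)
From mathcomp Require Import all_boot.
Set Implicit Arguments. Unset Strict Implicit. Unset Printing Implicit Defensive.

(* Vertices v_0..v_{n-1} are 'I_n; subsets of V_n are {set 'I_n}. *)
Lemma ord_pos n (i : 'I_n) : 0 < n.
Proof. by case: i => m /= /(leq_ltn_trans (leq0n m)). Qed.

(* the vertex v_(j mod n) (n > 0 is witnessed by i) *)
Definition ordmod n (i : 'I_n) (j : nat) : 'I_n := Ordinal (ltn_pmod j (ord_pos i)).

Definition vsucc n (i : 'I_n) : 'I_n := ordmod i i.+1.

(* The dihedral group D_(2n): the element (k, b) stands for sigma^k tau^b,
   so it has exactly 2n elements; it maps v_i to v_(k + i) if b = false and
   to v_(k - i) if b = true. *)
Definition dihedral n := ('I_n * bool)%type.

Definition dmap n (g : dihedral n) (i : 'I_n) : 'I_n :=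
  ordmod i ((if g.2 then n - i else i) + g.1).

Definition dact n (g : dihedral n) (X : {set 'I_n}) : {set 'I_n} :=
  [set dmap g i | i in X].

Definition Xfam n : {set {set 'I_n}} :=
  [set X : {set 'I_n} |
     [forall i : 'I_n, ~~ ((i \in X) && (vsucc i \in X))] &&
     [forall i : 'I_n, [|| i \in X, vsucc i \in X | vsucc (vsucc i) \in X]]].

Definition dorbit n (X : {set 'I_n}) : {set {set 'I_n}} :=
  [set dact g X | g : dihedral n].

Definition orb (d n : nat) : nat :=
  #|[set dorbit X | X in Xfam n & #|dorbit X| == (2 * n) %/ d]|.

(* Main.v *)
Require Import Defs.
From mathcomp Require Import all_boot zify.
Set Implicit Arguments. Unset Strict Implicit. Unset Printing Implicit Defensive.

Lemma cong_by n x y t : (x + t) %% n = 0 -> (y + t) %% n = 0 -> x %% n = y %% n.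
Proof. by move=> h1 h2; apply/eqP; rewrite -(eqn_modDr t) h1 h2. Qed.

Definition rot n (a : nat) (X : {set 'I_n}) : {set 'I_n} := [set ordmod i (i + a) | i in X].
Definition tau n (X : {set 'I_n}) : {set 'I_n} := [set ordmod i (n - i) | i in X].

Lemma rotD n a b (X : {set 'I_n}) : rot a (rot b X) = rot (b + a) X.
Proof.
rewrite /rot -imset_comp; apply: eq_imset => i /=; apply: val_inj => /=.
by rewrite modnDml addnA.
Qed.

Lemma rot_dvd n a (X : {set 'I_n}) : n %| a -> rot a X = X.
Proof.
move=> /eqP ha; rewrite /rot -[RHS]imset_id; apply: eq_imset => i /=; apply: val_inj => /=.
by rewrite -modnDmr ha addn0 modn_small.
Qed.

Lemma rot0 n (X : {set 'I_n}) : rot 0 X = X.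
Proof. by apply: rot_dvd; rewrite dvdn0. Qed.

Lemma rot_mod n a (X : {set 'I_n}) : rot a X = rot (a %% n) X.
Proof. by apply: eq_imset => i; apply: val_inj => /=; rewrite modnDmr. Qed.

Lemma tauK n : involutive (@tau n).
Proof.
move=> X; rewrite /tau -imset_comp -[RHS]imset_id; apply: eq_imset => i /=; apply: val_inj => /=.
have n0 := ord_pos i.
rewrite -[X in _ = X](modn_small (ltn_ord i)).
apply: (@cong_by _ _ _ (n - i)).
  by rewrite -modnDmr subnK ?modnn // ltnW // ltn_pmod.
by rewrite subnKC ?modnn // ltnW.
Qed.

Lemma tau_rot n a b (Y : {set 'I_n}) : n %| a + b -> tau (rot a Y) = rot b (tau Y).
Proof.
move=> hd; rewrite /tau /rot -!imset_comp; apply: eq_imset => i /=; apply: val_inj => /=.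
have n0 := ord_pos i.
apply: (@cong_by _ _ _ (i + a)).
  by rewrite -modnDmr subnK ?modnn // ltnW // ltn_pmod.
rewrite -addnA modnDml.
have -> : n - i + (b + (i + a)) = n + (a + b).
  by have := ltn_ord i; lia.
by rewrite modnDl; apply/eqP.
Qed.

Lemma dactE n a b (X : {set 'I_n}) : dact (a, b) X = rot a (if b then tau X else X).
Proof.
case: b => //; rewrite /dact /rot /tau -imset_comp; apply: eq_imset => i /=.
by apply: val_inj => /=; rewrite modnDml.
Qed.
Definition pim m (hm : 0 < m) n (i : 'I_n) : 'I_m := Ordinal (ltn_pmod i hm).
Definition liftS m (hm : 0 < m) n (Y : {set 'I_m}) : {set 'I_n} := [set i | pim hm i \in Y].

Lemma pim_succ m (hm : 0 < m) n (i : 'I_n) : m %| n -> pim hm (vsucc i) = vsucc (pim hm i).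
Proof. by move=> hd; apply: val_inj => /=; rewrite (modn_dvdm _ hd) -[i.+1]addn1 -[(i %% m).+1]addn1 modnDml. Qed.

Lemma pim_widen m (hm : 0 < m) n (hle : m <= n) (j : 'I_m) : pim hm (widen_ord hle j) = j.
Proof. by apply: val_inj => /=; rewrite modn_small. Qed.

Lemma forall_pim m (hm : 0 < m) n (hle : m <= n) (P : 'I_m -> bool) :
  [forall i : 'I_n, P (pim hm i)] = [forall j : 'I_m, P j].
Proof.
apply/forallP/forallP => H j //.
by have := H (widen_ord hle j); rewrite pim_widen.
Qed.

Lemma liftS_Xfam m (hm : 0 < m) n (Y : {set 'I_m}) : 0 < n -> m %| n ->
  (liftS hm n Y \in Xfam n) = (Y \in Xfam m).
Proof.
move=> hn hd; have hle := dvdn_leq hn hd.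
rewrite !inE.
have E1 : [forall i : 'I_n, ~~ ((i \in liftS hm n Y) && (vsucc i \in liftS hm n Y))]
   = [forall j : 'I_m, ~~ ((j \in Y) && (vsucc j \in Y))].
  by rewrite -(forall_pim hm hle); apply: eq_forallb => i; rewrite !inE pim_succ.
have E2 : [forall i : 'I_n, [|| i \in liftS hm n Y, vsucc i \in liftS hm n Y
     | vsucc (vsucc i) \in liftS hm n Y]]
   = [forall j : 'I_m, [|| j \in Y, vsucc j \in Y | vsucc (vsucc j) \in Y]].
  by rewrite -(forall_pim hm hle); apply: eq_forallb => i; rewrite !inE !pim_succ.
by rewrite E1 E2.
Qed.

Lemma liftS_inj m (hm : 0 < m) n : 0 < n -> m %| n -> injective (@liftS m hm n).
Proof.
move=> hn hd; have hle := dvdn_leq hn hd.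
move=> Y Y' E; apply/setP => j.
by have := congr1 (fun Z : {set 'I_n} => widen_ord hle j \in Z) E; rewrite /= !inE pim_widen.
Qed.

Lemma rot_liftS_sub m (hm : 0 < m) n a (Y : {set 'I_m}) : m %| n ->
  rot a (liftS hm n Y) \subset liftS hm n (rot a Y).
Proof.
move=> hd; apply/subsetP => x /imsetP [z]; rewrite inE => hz ->.
rewrite inE; apply/imsetP; exists (pim hm z) => //; apply: val_inj => /=.
by rewrite (modn_dvdm _ hd) modnDml.
Qed.

Lemma rot_liftS m (hm : 0 < m) n a (Y : {set 'I_m}) : 0 < n -> m %| n ->
  rot a (liftS hm n Y) = liftS hm n (rot a Y).
Proof.
move=> hn hd; apply/eqP; rewrite eqEsubset rot_liftS_sub //=.
set a' := n - a %% n.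
have hna : n %| a + a'.
  have hr : a %% n < n by rewrite ltn_pmod.
  have -> : a + a' = (a %/ n).+1 * n.
    rewrite /a' {1}(divn_eq a n) mulSn.
    move: hr; set q := a %/ n * n; set r := a %% n; lia.
  exact: dvdn_mull.
have hma : m %| a + a' by apply: dvdn_trans hna.
have h1 := rot_liftS_sub hm a' (rot a Y) hd.
rewrite rotD (rot_dvd Y hma) in h1.
rewrite -{1}(rot_dvd (liftS hm n (rot a Y)) hna) addnC -rotD.
exact: imsetS h1.
Qed.

Lemma tau_liftS_sub m (hm : 0 < m) n (Y : {set 'I_m}) : m %| n ->
  tau (liftS hm n Y) \subset liftS hm n (tau Y).
Proof.
move=> hd; apply/subsetP => x /imsetP [z]; rewrite inE => hz ->.
rewrite inE; apply/imsetP; exists (pim hm z) => //; apply: val_inj => /=.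
rewrite (modn_dvdm _ hd).
apply: (@cong_by _ _ _ z).
  by rewrite subnK ?(ltnW (ltn_ord z)) //; apply/eqP.
by rewrite -modnDmr subnK ?modnn // ltnW // ltn_pmod.
Qed.

Lemma tau_liftS m (hm : 0 < m) n (Y : {set 'I_m}) : m %| n ->
  tau (liftS hm n Y) = liftS hm n (tau Y).
Proof.
move=> hd; apply/eqP; rewrite eqEsubset tau_liftS_sub //=.
have h1 := tau_liftS_sub hm (tau Y) hd; rewrite tauK in h1.
rewrite -{1}(tauK (liftS hm n (tau Y))).
exact: imsetS h1.
Qed.

Lemma dact_liftS m (hm : 0 < m) n (a : 'I_n) b (Y : {set 'I_m}) : 0 < n -> m %| n ->
  dact (a, b) (liftS hm n Y) = liftS hm n (dact (pim hm a, b) Y).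
Proof.
move=> hn hd; rewrite !dactE.
have -> : (if b then tau (liftS hm n Y) else liftS hm n Y)
          = liftS hm n (if b then tau Y else Y) by case: b; rewrite ?tau_liftS.
by rewrite rot_liftS // [rot a _]rot_mod.
Qed.

Lemma dorbit_liftS m (hm : 0 < m) n (Y : {set 'I_m}) : 0 < n -> m %| n ->
  dorbit (liftS hm n Y) = [set liftS hm n Z | Z in dorbit Y].
Proof.
move=> hn hd; have hle := dvdn_leq hn hd.
apply/setP => Z; apply/imsetP/imsetP.
  case=> [[a b]] _ ->; exists (dact (pim hm a, b) Y); last by rewrite dact_liftS.
  exact: imset_f.
case=> W /imsetP [[a b] _ ->] ->; exists (widen_ord hle a, b) => //.
by rewrite dact_liftS // pim_widen.
Qed.

Lemma card_dorbit_liftS m (hm : 0 < m) n (Y : {set 'I_m}) : 0 < n -> m %| n ->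
  #|dorbit (liftS hm n Y)| = #|dorbit Y|.
Proof. by move=> hn hd; rewrite dorbit_liftS // card_imset //; apply: liftS_inj. Qed.

Definition projS m n (hle : m <= n) (X : {set 'I_n}) : {set 'I_m} :=
  [set j | widen_ord hle j \in X].

Lemma rot_mem n a (X : {set 'I_n}) (j : 'I_n) : rot a X = X -> j \in X -> ordmod j (j + a) \in X.
Proof. by move=> E hj; rewrite -E; apply: imset_f. Qed.

Lemma rotM n a c (X : {set 'I_n}) : rot a X = X -> rot (c * a) X = X.
Proof.
move=> E; elim: c => [|c IH]; first by rewrite mul0n rot0.
by rewrite mulSn addnC -rotD IH E.
Qed.

Lemma recover m (hm : 0 < m) n (hle : m <= n) (X : {set 'I_n}) : m %| n -> rot m X = X ->
  X = liftS hm n (projS hle X).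
Proof.
move=> hd E; apply/setP => i; rewrite !inE; apply/idP/idP => hi.
  have := rot_mem (rotM (n %/ m - i %/ m) E) hi.
  suff -> : ordmod i (i + (n %/ m - i %/ m) * m) = widen_ord hle (pim hm i) by [].
  apply: val_inj => /=; rewrite mulnBl divnK //.
  have h1 : i %/ m * m <= i by apply: leq_divM.
  have h2 := ltn_ord i.
  have h3 : i %% m < m by rewrite ltn_pmod.
  have h4 := divn_eq i m.
  have -> : i + (n - i %/ m * m) = i %% m + n.
    move: h1 h2 h4; set q := i %/ m * m; set r := i %% m; lia.
  rewrite modnDr modn_small //; exact: leq_trans h3 hle.
have := rot_mem (rotM (i %/ m) E) hi.
suff -> : ordmod (widen_ord hle (pim hm i)) (i %% m + i %/ m * m) = i by [].
by apply: val_inj => /=; rewrite addnC -divn_eq modn_small.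
Qed.

Lemma rot_iter n k (X : {set 'I_n}) : rot k X = iter k (@rot n 1) X.
Proof. by elim: k => [|k IH]; rewrite ?rot0 // iterS -IH rotD addn1. Qed.

Lemma rho_inj n : 0 < n -> injective (@rot n 1).
Proof.
move=> hn; apply: (@can_inj _ _ _ (rot (n - 1))) => X.
by rewrite rotD subnKC // rot_dvd.
Qed.

Definition Srot n (X : {set 'I_n}) : {set {set 'I_n}} := [set rot k X | k : 'I_n].

Lemma Srot_mem n (X Z : {set 'I_n}) : 0 < n -> (Z \in Srot X) = fconnect (@rot n 1) X Z.
Proof.
move=> hn; apply/imsetP/idP.
  by case=> k _ ->; rewrite rot_iter; apply: fconnect_iter.
move=> /iter_findex <-; rewrite -rot_iter rot_mod.
by exists (Ordinal (ltn_pmod (findex (rot 1) X Z) hn)).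
Qed.

Lemma card_Srot n (X : {set 'I_n}) : 0 < n -> #|Srot X| = order (@rot n 1) X.
Proof. by move=> hn; rewrite /order; apply: eq_card => Z; rewrite Srot_mem. Qed.

Lemma iter_mul_order (T : finType) (f : T -> T) (x : T) c :
  injective f -> iter (c * order f x) f x = x.
Proof.
move=> inj; elim: c => [|c IH] //.
by rewrite mulSn iterD IH iter_order.
Qed.

Lemma order_dvd (T : finType) (f : T -> T) (x : T) k :
  injective f -> iter k f x = x -> order f x %| k.
Proof.
move=> inj E; have hp := order_gt0 f x.
have E2 : iter (k %% order f x) f x = x.
  transitivity (iter k f x); last exact: E.
  by rewrite {2}(divn_eq k (order f x)) addnC iterD iter_mul_order.
have h0 : findex f x x = 0 by rewrite /findex /orbit -orderSpred /= eqxx.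
have := findex_iter (ltn_pmod k hp); rewrite E2 h0 => h.
by rewrite /dvdn -h.
Qed.

Lemma Srot_tau n (X : {set 'I_n}) : 0 < n -> Srot (tau X) = [set tau Z | Z in Srot X].
Proof.
move=> hn; apply/setP => Z; apply/imsetP/imsetP.
  case=> k _ ->; exists (rot ((n - k) %% n) X); first by apply/imsetP; exists (Ordinal (ltn_pmod (n - k) hn)).
  by rewrite -rot_mod (tau_rot (b := k)) // subnK // ltnW.
case=> W /imsetP [k _ ->] ->; exists (Ordinal (ltn_pmod (n - k) hn)) => //=.
by rewrite -rot_mod (tau_rot (b := n - k)) // subnKC // ltnW.
Qed.

Lemma card_Srot_tau n (X : {set 'I_n}) : 0 < n -> #|Srot (tau X)| = #|Srot X|.
Proof. by move=> hn; rewrite Srot_tau // card_imset //; apply: (can_inj (@tauK n)). Qed.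

Lemma dorbit_split n (X : {set 'I_n}) : dorbit X = Srot X :|: Srot (tau X).
Proof.
apply/setP => Z; rewrite inE; apply/imsetP/orP.
  by case=> [[a b]] _ ->; rewrite dactE; case: b; [right|left]; apply/imsetP; exists a.
case=> /imsetP [a _ ->].
  by exists (a, false).
by exists (a, true); rewrite // dactE.
Qed.

Lemma card_dorbit n (X : {set 'I_n}) : 0 < n ->
  #|dorbit X| = order (@rot n 1) X \/ #|dorbit X| = order (@rot n 1) X + order (@rot n 1) X.
Proof.
move=> hn; have inj := rho_inj hn; have sym := fconnect_sym inj.
case: (boolP (fconnect (@rot n 1) X (tau X))) => h.
  have E : Srot (tau X) = Srot X.
    apply/setP => Z; rewrite !Srot_mem //; symmetry; exact: (same_connect sym h).
  by left; rewrite dorbit_split E setUid card_Srot.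
right; have E : Srot X :&: Srot (tau X) = set0.
  apply/setP => Z; rewrite !inE !Srot_mem //; apply/negP => /andP [h1 h2].
  by move/negP: h; apply; apply: connect_trans h1 _; rewrite sym.
have := cardsUI (Srot X) (Srot (tau X)).
by rewrite -dorbit_split E cards0 addn0 card_Srot_tau // card_Srot.
Qed.

Lemma key n d (X : {set 'I_n}) : 0 < n -> d %| 2 * n -> #|dorbit X| = (2 * n) %/ d ->
  rot (if odd d then n %/ d else (2 * n) %/ d) X = X.
Proof.
move=> hn hd hc.
have inj := rho_inj hn.
set p := order (@rot n 1) X.
have hp : 0 < p := order_gt0 _ _.
have hpn : p %| n by apply: order_dvd => //; rewrite -rot_iter rot_dvd.
have hd0 : 0 < d.
  by case: d hd {hc} => //; rewrite dvd0n muln_eq0 /= => /eqP h; rewrite h in hn.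
have hq := divnK hd; rewrite -hc in hq.
suff : p %| (if odd d then n %/ d else (2 * n) %/ d).
  by case/dvdnP => c ->; rewrite rot_iter iter_mul_order.
case: (card_dorbit X hn) => hc2; rewrite hc2 in hq.
  case: ifP => hodd; last by rewrite -hc hc2.
  case/dvdnP: hpn => t ht.
  have h2 : p * d = p * (2 * t).
    have : n = t * p by [].
    move: hq; rewrite -/p; clear -ht; move: ht; set N := n; lia.
  move/eqP: h2; rewrite eqn_pmul2l // => /eqP hdt.
  by move: hodd; rewrite hdt oddM.
case: ifP => _; last by rewrite -hc hc2 dvdn_add.
have hn' : n = p * d.
  move: hq; rewrite -/p; set N := n; lia.
suff -> : n %/ d = p by [].
by rewrite hn' mulnK.
Qed.

Lemma transfer n m k (hm : 0 < m) : 0 < n -> m %| n ->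
  (forall X : {set 'I_n}, X \in Xfam n -> #|dorbit X| = k -> rot m X = X) ->
  #|[set dorbit X | X in Xfam n & #|dorbit X| == k]|
  = #|[set dorbit Y | Y in Xfam m & #|dorbit Y| == k]|.
Proof.
move=> hn hd H; have hle := dvdn_leq hn hd.
have inj : injective (fun A : {set {set 'I_m}} => [set liftS hm n Z | Z in A]).
  by apply: imset_inj; apply: liftS_inj.
rewrite -(card_imset _ inj); apply: eq_card => O.
apply/imsetP/imsetP.
  case=> X; rewrite inE => /andP [hX /eqP hk] ->.
  have E := recover hm hle hd (H X hX hk).
  exists (dorbit (projS hle X)); last by rewrite -dorbit_liftS // -E.
  apply/imsetP; exists (projS hle X) => //.
  rewrite inE -(liftS_Xfam hm _ hn hd) -E hX /= -(card_dorbit_liftS hm _ hn hd) -E hk.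
  by [].
case=> O' /imsetP [Y]; rewrite inE => /andP [hY /eqP hk] -> ->.
exists (liftS hm n Y); last by rewrite dorbit_liftS.
by rewrite inE liftS_Xfam // hY card_dorbit_liftS // hk /=.
Qed.

Theorem proposition2p4 (n d : nat) :
  0 < n -> d %| 2 * n ->
  orb d n = (if odd d then orb 1 (n %/ d) else orb 2 ((2 * n) %/ d)).
Proof.
move=> hn hd.
have hd0 : 0 < d.
  by case: d hd => //; rewrite dvd0n muln_eq0 /= => /eqP h; rewrite h in hn.
rewrite /orb; case: ifP => hodd.
  have hdn : d %| n by move: hd; rewrite Gauss_dvdr // coprimen2.
  have hm : 0 < n %/ d by rewrite divn_gt0 // dvdn_leq.
  rewrite divn1 (muln_divA _ hdn).
  apply: (transfer hm hn (dvdn_div hdn)) => X _ hX.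
  by have := key hn hd hX; rewrite hodd.
have hn2 : 0 < 2 * n by rewrite muln_gt0.
have hm : 0 < (2 * n) %/ d by rewrite divn_gt0 // dvdn_leq.
have he : d = 2 * d./2 by rewrite -{1}(odd_double_half d) hodd add0n -mul2n.
have hmn : (2 * n) %/ d %| n.
  by rewrite dvdn_divLR // {1}he mulnA [n * 2]mulnC dvdn_mulr.
rewrite mulKn //.
apply: (transfer hm hn hmn) => X _ hX.
by have := key hn hd hX; rewrite hodd.
Qed.
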